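(* Let $\mathcal{P}\subseteq\mathcal{S}\subseteq\mathcal{T}$ be group properties. Suppose that for every nonempty set of the form $\mathcal{B}=\{G\in\mathcal{S}: \forall i,j\le k\ (G(i,j)=m_{i,j})\}$ (with $k\in\mathbb{N}$, $m_{i,j}\in\mathbb{N}$) there exist $G_0\in\mathcal{B}$, $H\in\mathcal{P}$ and a group homomorphism $\varphi:(\mathbb{N},G_0)\to(\mathbb{N},H)$ such that $\varphi$ restricted to $\operatorname{supp}\mathcal{B}=\{1,\dots,k\}\cup\{m_{i,j}: i,j\le k\}$ is injective. Then $\mathcal{P}$ is dense in $\mathcal{S}$.
   Context: Let $\mathbb{N}^{\mathbb{N}\times\mathbb{N}}$ be the space of functions $\mathbb{N}\times\mathbb{N}\to\mathbb{N}$ with the product of discrete topologies. Let $\mathcal{A}=\{G\in\mathbb{N}^{\mathbb{N}\times\mathbb{N}}: G \text{ is an abelian group operation on } \mathbb{N} \text{ with identity element } 0\}$ and $\mathcal{T}=\{G\in\mathcal{A}: (\mathbb{N},G)\text{ is torsion-free}\}$, with the subspace topology. A set $\mathcal{P}\subseteq\mathcal{T}$ is a group property if it is isomorphism invariant: for any $G\in\mathcal{T}$, if $(\mathbb{N},G)$ is isomorphic to $(\mathbb{N},H)$ for some $H\in\mathcal{P}$, then $G\in\mathcal{P}$. *)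

(* Defs.v *)
From HB Require Import structures.
From mathcomp Require Import all_boot all_order all_algebra.
From mathcomp Require Import all_classical all_reals all_analysis.

Set Implicit Arguments.
Unset Strict Implicit.
Unset Printing Implicit Defensive.

Local Open Scope classical_set_scope.

(* Points of the space N^(N x N): binary operations on nat. *)
Definition op := (nat * nat -> nat)%type.

(* The space N^(N x N) with the product of the discrete topologies
   (nat carries the discrete topology in mathcomp-analysis; {ptws _ -> _}
   is the product / pointwise-convergence topology). *)
Definition Space := {ptws (nat * nat) -> nat}.

Definition is_abgroup (G : op) : Prop :=
  [/\ (forall a b c, G (G (a, b), c) = G (a, G (b, c))),
      (forall a b, G (a, b) = G (b, a)),
      (forall a, G (0%N, a) = a) &
      (forall a, exists b, G (a, b) = 0%N)].

Fixpoint gmul (G : op) (n : nat) (a : nat) : nat :=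
  if n is n'.+1 then G (a, gmul G n' a) else 0%N.

Definition torsion_free (G : op) : Prop :=
  forall (a n : nat), (0 < n)%N -> gmul G n a = 0%N -> a = 0%N.

Definition calA : set op := [set G | is_abgroup G].
Definition calT : set op := [set G | is_abgroup G /\ torsion_free G].

Definition group_hom (G H : op) (phi : nat -> nat) : Prop :=
  forall a b, phi (G (a, b)) = H (phi a, phi b).

Definition group_iso (G H : op) (phi : nat -> nat) : Prop :=
  group_hom G H phi /\ bijective phi.

Definition group_property (P : set op) : Prop :=
  P `<=` calT /\
  (forall G H, calT G -> P H -> (exists phi, group_iso G H phi) -> P G).

Definition basic_set (S : set op) (k : nat) (m : nat -> nat -> nat) : set op :=
  [set G | S G /\ forall i j, (i <= k)%N -> (j <= k)%N -> G (i, j) = m i j].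

Definition supp_basic (k : nat) (m : nat -> nat -> nat) : set nat :=
  [set x | ((1 <= x)%N /\ (x <= k)%N) \/
           exists i j, [/\ (i <= k)%N, (j <= k)%N & x = m i j]].

(* P is dense in S, S carrying the subspace topology of N^(N x N):
   every point of S lies in the closure of P. *)
Definition dense_in (P S : set op) : Prop :=
  S `<=` @closure Space P.

(* Main.v *)
Require Import Defs.
From HB Require Import structures.
From mathcomp Require Import all_boot all_order all_algebra.
From mathcomp Require Import all_classical all_reals all_analysis.
Local Open Scope classical_set_scope.

Definition swp (a b z : nat) : nat :=
  if z == a then b else if z == b then a else z.

Lemma swpK a b : cancel (swp a b) (swp a b).
Proof.
move=> z; rewrite /swp.
case: (eqVneq z a) => [->|Ha]; first by rewrite eqxx; case: (eqVneq b a).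
case: (eqVneq z b) => [->|Hb]; first by rewrite eqxx.
by rewrite (negbTE Ha) (negbTE Hb).
Qed.

Lemma perm_lemma (f : nat -> nat) (D : nat -> Prop) (N : nat) :
  (forall x y, D x -> D y -> f x = f y -> x = y) ->
  exists sg tau : nat -> nat, [/\ cancel sg tau, cancel tau sg &
     forall x, (x < N)%N -> D x -> sg (f x) = x].
Proof.
move=> finj; elim: N => [|N [sg [tau [k1 k2 hs]]]].
  by exists id, id; split.
have [DN|nDN] := pselect (D N); last first.
  exists sg, tau; split => // x; rewrite ltnS leq_eqVlt => /orP [/eqP ->|] //.
  exact: hs.
exists (swp (sg (f N)) N \o sg), (tau \o swp (sg (f N)) N); split.
- by move=> z /=; rewrite swpK k1.
- by move=> z /=; rewrite k2 swpK.
move=> x; rewrite ltnS leq_eqVlt => /orP [/eqP ->|xN] Dx /=.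
  by rewrite /swp eqxx.
rewrite (hs x) // /swp.
case: (eqVneq x (sg (f N))) => [E|_].
  have : f x = f N by rewrite -[f x]k1 -[f N]k1 hs // -E.
  by move/(finj _ _ Dx DN) => E'; rewrite E' ltnn in xN.
by rewrite (ltn_eqF xN).
Qed.

Lemma hom0 G H phi : calA G -> calA H -> group_hom G H phi -> phi 0%N = 0%N.
Proof.
move=> [aG cG iG vG] [aH cH iH vH] hp.
have e : H (phi 0%N, phi 0%N) = phi 0%N by rewrite -hp iG.
have [b hb] := vH (phi 0%N).
transitivity (H (phi 0%N, H (phi 0%N, b))); last by rewrite -aH e.
by rewrite hb cH iH.
Qed.

Definition transp (sg tau : nat -> nat) (H : op) : op :=
  fun p => sg (H (tau p.1, tau p.2)).

Lemma gmul_transp sg tau H n a : sg 0%N = 0%N -> cancel sg tau ->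
  gmul (transp sg tau H) n a = sg (gmul H n (tau a)).
Proof.
move=> s0 k1; elim: n => [|n IH] /=; first by rewrite s0.
by rewrite /transp /= IH k1.
Qed.

Lemma transp_T sg tau H : calT H -> sg 0%N = 0%N -> cancel sg tau -> cancel tau sg ->
  calT (transp sg tau H).
Proof.
move=> [[aH cH iH vH] tH] s0 k1 k2.
have t0 : tau 0%N = 0%N by rewrite -s0 k1.
rewrite /calT /is_abgroup /=; split; first split.
- by move=> a b c; rewrite /transp /= !k1 aH.
- by move=> a b; rewrite /transp /= cH.
- by move=> a; rewrite /transp /= t0 iH k2.
- by move=> a; have [b hb] := vH (tau a); exists (sg b); rewrite /transp /= k1 hb.
move=> a n n0; rewrite gmul_transp // => h.
have : gmul H n (tau a) = 0%N by rewrite -t0 -h k1.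
by move/(tH _ _ n0) => ta; rewrite -[a]k2 ta s0.
Qed.

Fixpoint bnd (g : nat -> nat) n := if n is n'.+1 then maxn (g n) (bnd g n') else g 0%N.

Lemma bndP g n i : (i <= n)%N -> (g i <= bnd g n)%N.
Proof.
elim: n => [|n IH] /=; first by rewrite leqn0 => /eqP ->.
rewrite leq_eqVlt ltnS => /orP [/eqP ->|/IH h]; first by rewrite leq_maxl.
by rewrite (leq_trans h) // leq_maxr.
Qed.

Lemma approx (P S : set op) :
  group_property P -> group_property S -> P `<=` S ->
  (forall (k : nat) (m : nat -> nat -> nat),
     basic_set S k m !=set0 ->
     exists G0 H (phi : nat -> nat),
       [/\ basic_set S k m G0, P H, group_hom G0 H phi &
           {in supp_basic k m &, injective phi}]) ->
  forall G k, S G -> exists H, P H /\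
    forall i j, (i <= k)%N -> (j <= k)%N -> H (i, j) = G (i, j).
Proof.
move=> [PT Piso] [ST Siso] PS hyp G k SG.
pose m i j := G (i, j).
have [G0 [H [phi [[SG0 G0m] PH hphi injphi]]]] : exists G0 H (phi : nat -> nat),
       [/\ basic_set S k m G0, P H, group_hom G0 H phi &
           {in supp_basic k m &, injective phi}].
  by apply: hyp; exists G; split.
have [[aG cG iG vG] _] := ST G SG.
have phi0 : phi 0%N = 0%N := @hom0 G0 H phi (ST _ SG0).1 (PT _ PH).1 hphi.
pose N := (bnd (fun i => bnd (fun j => G (i, j)) k) k + k)%N.
have [sg [tau [k1 k2 hs]]] := @perm_lemma phi (supp_basic k m) N.+1
  (fun x y Dx Dy => injphi x y (mem_set Dx) (mem_set Dy)).
have suppi : forall i, (i <= k)%N -> supp_basic k m i /\ (i < N.+1)%N.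
  move=> i ik; split; last by rewrite ltnS (leq_trans ik) // leq_addl.
  case: i ik => [|i] ik; last by left.
  by right; exists 0%N, 0%N; split => //; rewrite /m iG.
have suppm : forall i j, (i <= k)%N -> (j <= k)%N ->
    supp_basic k m (m i j) /\ (m i j < N.+1)%N.
  move=> i j ik jk; split; first by right; exists i, j.
  rewrite ltnS (leq_trans _ (leq_addr _ _)) //.
  apply: leq_trans (bndP (fun i => bnd (fun j => G (i, j)) k) _ _ ik).
  exact: (bndP (fun j => G (i, j)) _ _ jk).
have s0 : sg 0%N = 0%N.
  by have [a b] := suppi 0%N (leq0n k); rewrite -{1}phi0 hs.
exists (transp sg tau H); split.
  apply: (Piso _ H) => //; first exact: transp_T (PT _ PH) s0 k1 k2.
  exists tau; split; last by exists sg.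
  by move=> a b; rewrite /transp /= k1.
move=> i j ik jk; rewrite /transp /=.
have ti : forall i, (i <= k)%N -> tau i = phi i.
  by move=> x xk; have [a b] := suppi x xk; rewrite -{1}(hs x b a) k1.
rewrite (ti i ik) (ti j jk) -hphi G0m //.
by have [a b] := suppm i j ik jk; rewrite hs.
Qed.

Theorem lemma2p10 (P S : set op) :
  group_property P -> group_property S -> P `<=` S ->
  (forall (k : nat) (m : nat -> nat -> nat),
     basic_set S k m !=set0 ->
     exists G0 H (phi : nat -> nat),
       [/\ basic_set S k m G0, P H, group_hom G0 H phi &
           {in supp_basic k m &, injective phi}]) ->
  dense_in P S.
Proof.
move=> gP gS PS hyp G SG.
have ex : forall k, exists H, P H /\
    forall i j, (i <= k)%N -> (j <= k)%N -> H (i, j) = G (i, j).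
  by move=> k; exact: approx gP gS PS hyp G k SG.
have [Hs hHs] := choice ex.
have cv : (fun n => Hs n : Defs.Space) @ \oo --> (G : Defs.Space).
  apply/pointwise_cvgP => -[a b].
  apply: cvg_near_cst; exists (maxn a b) => // n /= hn.
  apply: (hHs n).2.
    by apply: leq_trans hn; rewrite leq_maxl.
  by apply: leq_trans hn; rewrite leq_maxr.
move=> B nB.
have [N _ hN] := cv B nB.
have [h1 h2] := hHs N.
by exists (Hs N); split => //; apply: hN => /=.
Qed.
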